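(* Let $\alpha$ be a Heron angle with $0\le\alpha\le\pi$, and let $\lambda$ be a rational number with $0\le\lambda\le1$ such that $\sin\alpha=\lambda^2$. Then $\alpha\in\{0,\pi/2,\pi\}$.
   Context: An angle $\theta$ is called a Heron angle if both $\sin\theta$ and $\cos\theta$ are rational numbers. *)

(* Defs.v *)
From Stdlib Require Import Reals ZArith.
Open Scope R_scope.

Definition is_rational (x : R) : Prop :=
  exists (p q : Z), q <> 0%Z /\ x = IZR p / IZR q.

Definition heron_angle (theta : R) : Prop :=
  is_rational (sin theta) /\ is_rational (cos theta).

(* Main.v *)
Require Import Defs.
From Stdlib Require Import Reals ZArith Lia Lra.

Module NT.
From mathcomp Require Import all_boot zify.
Local Close Scope R_scope.
Local Open Scope nat_scope.
Lemma sq_inj k m : k ^ 2 = m ^ 2 -> k = m.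
Proof. rewrite !expnS expn0 !muln1 => h. nia. Qed.
Lemma even_ex n : ~~ odd n -> exists k, n = 2 * k.
Proof. move=> h; exists n./2; have := odd_double_half n; rewrite (negbTE h) -muln2. lia. Qed.
Lemma sq_coprime a b c : coprime a b -> a * b = c ^ 2 -> exists u, a = u ^ 2.
Proof.
move=> cab Habc; exists (gcdn a c); apply/eqP; rewrite eqn_dvd; apply/andP; split.
  have -> : gcdn a c ^ 2 = gcdn a c * gcdn a c by rewrite expnS expn1.
  rewrite muln_gcdl !muln_gcdr !dvdn_gcd.
  have hcc : a %| c * c by rewrite mulnn -Habc dvdn_mulr.
  rewrite hcc.
  by rewrite dvdn_mulr // dvdn_mulr // dvdn_mull.
have cgb : coprime (gcdn a c ^ 2) b by apply: coprimeXl; apply: coprime_dvdl (dvdn_gcdl a c) cab.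
rewrite -(Gauss_dvdl _ cgb) Habc; apply: dvdn_exp2r; exact: dvdn_gcdr.
Qed.

Lemma pyth a b c : coprime a b -> a^2 + b^2 = c^2 -> ~~ odd b ->
  exists r s, [/\ coprime r s, a + s^2 = r^2, b = 2*r*s & c = r^2 + s^2].
Proof.
move=> cab E eb.
have [k bk] := even_ex _ eb.
have oa : odd a.
  apply/negPn/negP => ea.
  have c2b : coprime 2 b by apply: coprime_dvdl cab; rewrite dvdn2.
  by rewrite coprime2n (negbTE eb) in c2b.
have oc : odd c.
  by have := congr1 odd E; rewrite oddD !oddX /= (negbTE eb) oa /= => <-.
have ac : a <= c by move: E; rewrite !expnS expn0 !muln1 => h; nia.
have [n cn] : exists n, c = a + 2 * n.
  have ev : ~~ odd (c - a) by rewrite oddB // oc oa.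
  have [n hn] := even_ex _ ev; exists n; lia.
have En : n * (a + n) = k ^ 2.
  move: E; rewrite cn bk !expnS expn0 !muln1 => h; nia.
have cop : coprime n (a + n).
  rewrite /coprime -dvdn1.
  have := coprimeXr 2 cab; rewrite /coprime => /eqP <-.
  have g1 : gcdn n (a + n) %| n by apply: dvdn_gcdl.
  have g2 : gcdn n (a + n) %| a by rewrite -(dvdn_addl _ g1); apply: dvdn_gcdr.
  have g3 : gcdn n (a + n) %| c by rewrite cn dvdn_add // dvdn_mull.
  have h2 : gcdn n (a + n) %| a ^ 2 by rewrite expnS dvdn_mulr.
  rewrite dvdn_gcd g2 /= -(dvdn_addr _ h2) E.
  by rewrite expnS dvdn_mulr.
have [s ns] := sq_coprime _ _ _ cop En.
have [r rn] : exists r, a + n = r ^ 2.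
  by apply: (sq_coprime _ n k); rewrite 1?coprime_sym // mulnC.
exists r, s; split.
- by rewrite -(coprime_pexpl (k:=2)) // -(coprime_pexpr (k:=2)) // -rn -ns coprime_sym.
- by rewrite -ns.
- rewrite bk -mulnA; congr (2 * _); apply: sq_inj.
  by rewrite expnMn -rn -ns mulnC En.
- by rewrite cn -rn -ns; lia.
Qed.

Lemma t1 (i j k : nat) : (2*j+1)^2 + (2*i+1)^4 = (2*k)^4 -> False.
Proof. rewrite !expnS expn0. nia. Qed.

Definition sol x y z := [/\ 0 < y, 0 < z & x ^ 4 = y ^ 4 + z ^ 2].

Lemma helperH x y p q : coprime p q -> x^2 = p^2 + q^2 -> y^2 = 2*p*q -> ~~ odd p -> 0 < y ->
  exists x' y' z', x' < x /\ sol x' y' z'.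
Proof.
move=> cpq hx hy ep yp.
have [t pt] := even_ex _ ep.
have ey : ~~ odd y.
  by apply/negP => oy; have := congr1 odd hy; rewrite oddX oy /= pt !oddM.
have [w yw] := even_ex _ ey.
have Etq : t * q = w ^ 2.
  move: hy; rewrite yw pt !expnS expn0 !muln1 => h; lia.
have ctq : coprime t q by apply: coprime_dvdl cpq; rewrite pt dvdn_mull.
have [u tu] := sq_coprime _ _ _ ctq Etq.
have [v qv] : exists v, q = v ^ 2.
  by apply: (sq_coprime _ t w); rewrite 1?coprime_sym // mulnC.
have up : 0 < u.
  case: u tu => [|u] // tu; move: hy yp; rewrite pt tu !expnS expn0 !muln1 => h; nia.
have vp : 0 < v.
  case: v qv => [|v] // qv; move: hy yp; rewrite qv !expnS expn0 !muln1 => h; nia.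
have cvu : coprime (v ^ 2) (2 * u ^ 2) by rewrite -qv -tu -pt coprime_sym.
have hx2 : (v ^ 2) ^ 2 + (2 * u ^ 2) ^ 2 = x ^ 2 by rewrite hx -qv -tu -pt addnC.
have eo : ~~ odd (2 * u ^ 2) by rewrite oddM.
have [R [S [cRS E1 E2 E3]]] := pyth _ _ _ cvu hx2 eo.
have ERS : R * S = u ^ 2 by move: E2; rewrite -mulnA => /eqP; rewrite eqn_pmul2l // => /eqP.
have [A RA] := sq_coprime _ _ _ cRS ERS.
have [B SB] : exists B, S = B ^ 2.
  by apply: (sq_coprime _ R u); rewrite 1?coprime_sym // mulnC.
have Bp : 0 < B.
  case: B SB => [|B] // SB; move: ERS up; rewrite SB !expnS expn0 !muln1 => h; nia.
exists A, B, v; split.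
  have h1 : A <= (A ^ 2) ^ 2 by case: (A) => [|A'] //; rewrite -expnM expnS leq_pmulr // expn_gt0.
  have h2 : 0 < (B ^ 2) ^ 2 by rewrite !expn_gt0 Bp.
  rewrite E3 RA SB; lia.
have e4 : forall n, n ^ 4 = (n ^ 2) ^ 2 by move=> n; rewrite -expnM.
by split => //; rewrite !e4 -RA -SB -E1 addnC.
Qed.

Lemma e4 n : n ^ 4 = (n ^ 2) ^ 2.
Proof. by rewrite -expnM. Qed.

Lemma odd_ex n : odd n -> exists k, n = 2 * k + 1.
Proof. move=> h; exists n./2; have := odd_double_half n; rewrite h -muln2. lia. Qed.

Lemma sq_lt r x : r ^ 2 < x ^ 2 -> r < x.
Proof. rewrite !expnS expn0 !muln1 => h; nia. Qed.

Lemma ident4 Y S : (Y + S) ^ 2 = S ^ 2 + (Y + S + S) * Y.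
Proof. rewrite !expnS expn0 !muln1; lia. Qed.

Lemma t3 i j w : (2 * w) ^ 2 = 2 * (2 * i + 1) * (2 * j + 1) -> False.
Proof. rewrite !expnS expn0 !muln1 => h; lia. Qed.

Lemma coprime_case x y z : 0 < x -> 0 < y -> 0 < z -> x ^ 4 = y ^ 4 + z ^ 2 -> coprime x y ->
  exists x' y' z', x' < x /\ sol x' y' z'.
Proof.
move=> xp yp zp E cxy.
have cyz : coprime (y ^ 2) z.
  rewrite /coprime -dvdn1.
  have c4 : coprime (x ^ 4) (y ^ 2) by apply: coprimeXl; apply: coprimeXr.
  apply: (@dvdn_trans (gcdn (x ^ 4) (y ^ 2))); last by rewrite (eqP c4).
  have d1 : gcdn (y ^ 2) z %| y ^ 2 := dvdn_gcdl _ _.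
  have d2 : gcdn (y ^ 2) z %| z := dvdn_gcdr _ _.
  rewrite dvdn_gcd d1 andbT E dvdn_add //.
    by rewrite e4 expnS dvdn_mulr.
  by rewrite expnS dvdn_mulr.
case oy: (odd y).
  case ox: (odd x).
    have ez : ~~ odd z.
      by have := congr1 odd E; rewrite oddD !oddX /= ox oy /= => <-.
    have E' : (y ^ 2) ^ 2 + z ^ 2 = (x ^ 2) ^ 2 by rewrite -!e4.
    have [r [s [crs E1 E2 E3]]] := pyth _ _ _ cyz E' ez.
    have sp : 0 < s by case: s E2 {E1 E3 crs} => [|s] //; rewrite muln0 => zz; move: zp; rewrite zz.
    exists r, s, (x * y); split.
      have : r ^ 2 < x ^ 2 by rewrite E3 -{1}[r ^ 2]addn0 ltn_add2l expn_gt0 sp.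
      exact: sq_lt.
    split => //; first by rewrite muln_gt0 xp yp.
    rewrite !e4 expnMn -E1 E3 -E1.
    exact: ident4.
  exfalso.
  have ez : odd z.
    by have := congr1 odd E; rewrite oddD !oddX /= ox oy /= => /esym /negbFE.
  have [i yi] := odd_ex _ oy.
  have [j zj] := odd_ex _ ez.
  have [k xk] := even_ex _ (negbT ox).
  by apply: (t1 i j k); rewrite -yi -zj -xk addnC E.
have ox : odd x.
  apply/negPn/negP => ex.
  have c2y : coprime 2 y by apply: coprime_dvdl cxy; rewrite dvdn2.
  by rewrite coprime2n oy in c2y.
have E' : z ^ 2 + (y ^ 2) ^ 2 = (x ^ 2) ^ 2 by rewrite -!e4 addnC.
have ey2 : ~~ odd (y ^ 2) by rewrite oddX oy.
have czy : coprime z (y ^ 2) by rewrite coprime_sym.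
have [r [s [crs E1 E2 E3]]] := pyth _ _ _ czy E' ey2.
case er: (odd r).
  case es: (odd s).
    exfalso.
    have [w yw] := even_ex _ (negbT oy).
    have [i ri] := odd_ex _ er.
    have [j sj] := odd_ex _ es.
    by apply: (t3 i j w); rewrite -yw -ri -sj.
  apply: (helperH x y s r) => //; first by rewrite coprime_sym.
    by rewrite E3 addnC.
  by rewrite E2 mulnAC.
  by rewrite es.
by apply: (helperH x y r s) => //; rewrite er.
Qed.

Lemma step x y z : sol x y z -> exists x' y' z', x' < x /\ sol x' y' z'.
Proof.
case=> yp zp E.
have xp : 0 < x.
  have : 0 < x ^ 4 by rewrite E addn_gt0 expn_gt0 yp.
  by rewrite expn_gt0 orbF.
have gp : 0 < gcdn x y by rewrite gcdn_gt0 xp.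
case: (leqP (gcdn x y) 1) => hg.
  have cxy : coprime x y by rewrite /coprime eqn_leq hg gp.
  exact: (coprime_case _ _ _ xp yp zp E cxy).
set g := gcdn x y in gp hg.
have hx : x = x %/ g * g by rewrite divnK // dvdn_gcdl.
have hy : y = y %/ g * g by rewrite divnK // dvdn_gcdr.
have hz4 : (g ^ 2) ^ 2 %| z ^ 2.
  have hy4 : g ^ 4 %| y ^ 4 by apply: dvdn_exp2r; apply: dvdn_gcdr.
  by rewrite -e4 -(dvdn_addr _ hy4) -E; apply: dvdn_exp2r; apply: dvdn_gcdl.
rewrite dvdn_pexp2r // in hz4.
have hz : z = z %/ g ^ 2 * g ^ 2 by rewrite divnK.
exists (x %/ g), (y %/ g), (z %/ g ^ 2); split.
  rewrite {2}hx; apply: ltn_Pmulr => //; rewrite divn_gt0 //; exact: dvdn_leq (dvdn_gcdl x y).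
split.
- by move: yp; rewrite {1}hy muln_gt0 => /andP [].
- by move: zp; rewrite {1}hz muln_gt0 => /andP [].
- move: E; rewrite {1}hx {1}hy {1}hz !expnMn mulnn -e4 -mulnDl => /eqP.
  by rewrite eqn_pmul2r ?expn_gt0 ?gp // => /eqP.
Qed.

Lemma nosol x : forall y z, ~ sol x y z.
Proof.
elim/ltn_ind: x => x IH y z hs.
have [x' [y' [z' [lt hs']]]] := step _ _ _ hs.
exact: (IH x' lt y' z' hs').
Qed.

Lemma fermat4 x y z : x * (x * (x * x)) = y * (y * (y * y)) + z * z -> y = 0 \/ z = 0.
Proof.
move=> E; case: (posnP y) => [->|yp]; first by left.
case: (posnP z) => [->|zp]; first by right.
exfalso; apply: (nosol x y z); split => //; rewrite !expnS expn0 !muln1.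
Qed.
End NT.

Open Scope R_scope.

Lemma fermatZ (x y z : Z) :
  (x * x * x * x = y * y * y * y + z * z)%Z -> y = 0%Z \/ z = 0%Z.
Proof.
intro E.
assert (H : Z.abs_nat y = 0%nat \/ Z.abs_nat z = 0%nat).
{ apply NT.fermat4 with (x := Z.abs_nat x).
  apply Nat2Z.inj.
  rewrite !Nat2Z.inj_add, !Nat2Z.inj_mul, !Zabs2Nat.id_abs.
  destruct (Z.abs_spec x) as [[_ ->]|[_ ->]];
  destruct (Z.abs_spec y) as [[_ ->]|[_ ->]];
  destruct (Z.abs_spec z) as [[_ ->]|[_ ->]]; lia. }
lia.
Qed.

Theorem lemma1 (alpha lambda : R)
  (Hheron : heron_angle alpha)
  (Halpha : 0 <= alpha <= PI)
  (Hlrat : is_rational lambda)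
  (Hl : 0 <= lambda <= 1)
  (Hsin : sin alpha = lambda ^ 2) :
  alpha = 0 \/ alpha = PI / 2 \/ alpha = PI.
Proof.
destruct Hheron as [_ [r [s [Hs Hc]]]].
destruct Hlrat as [p [q [Hq Hlq]]].
assert (Qn : IZR q <> 0) by (apply not_0_IZR; exact Hq).
assert (Sn : IZR s <> 0) by (apply not_0_IZR; exact Hs).
assert (Hp : IZR p = lambda * IZR q) by (rewrite Hlq; field; exact Qn).
assert (Hr : IZR r = cos alpha * IZR s) by (rewrite Hc; field; exact Sn).
assert (Hone : lambda ^ 4 + cos alpha ^ 2 = 1).
{ pose proof (sin2_cos2 alpha) as H. unfold Rsqr in H.
  replace (lambda ^ 4) with (sin alpha * sin alpha) by (rewrite Hsin; ring).
  rewrite <- H; ring. }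
assert (HZ : ((p*s) * (p*s) * (p*s) * (p*s) + (r*q*q*s) * (r*q*q*s)
              = (q*s) * (q*s) * (q*s) * (q*s))%Z).
{ apply eq_IZR. rewrite !plus_IZR, !mult_IZR. rewrite Hp, Hr.
  replace (IZR q * IZR s * (IZR q * IZR s) * (IZR q * IZR s) * (IZR q * IZR s))
    with (IZR q ^ 4 * IZR s ^ 4 * 1) by ring.
  rewrite <- Hone. ring. }
destruct (fermatZ (q*s) (p*s) (r*q*q*s) (eq_sym HZ)) as [H0|H0].
- assert (p = 0%Z) by nia.
  subst p.
  assert (Hs0 : sin alpha = 0).
  { rewrite Hsin. assert (lambda = 0).
    { rewrite Hlq. unfold Rdiv. rewrite Rmult_0_l. reflexivity. }
    rewrite H; ring. }
  destruct (Req_dec alpha 0) as [E|E]; [left; exact E|].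
  destruct (Req_dec alpha PI) as [E'|E']; [right; right; exact E'|].
  exfalso. assert (0 < sin alpha) by (apply sin_gt_0; lra). lra.
- assert (r = 0%Z) by nia.
  subst r.
  assert (Hc0 : cos alpha = 0) by (rewrite Hc; unfold Rdiv; ring).
  right; left.
  destruct (Rtotal_order alpha (PI/2)) as [E|[E|E]]; [|exact E|].
  + exfalso. assert (0 < cos alpha) by (apply cos_gt_0; lra). lra.
  + exfalso. assert (cos alpha < 0) by (apply cos_lt_0; lra). lra.
Qed.
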